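(* Consider a network as described in the context with $\Delta_{ij}>0$ for all $i\ne j$. Assume the similarity inequality $$\frac{\min_i\big(\theta_i/\max_{x\in S_i^{-1}([0,\theta_i])}\nabla S_i(x)\cdot f_i(x)\big)}{\max_i\big(\theta_i/\min_{x\in S_i^{-1}([0,\theta_i])}\nabla S_i(x)\cdot f_i(x)\big)}\ \ge\ 1-\frac{\min_{i\ne j}\Delta_{ij}}{\max_i\theta_i}.$$ Suppose the initial state satisfies $S_i(x_i(0))=0$ for all $i$. Then at the first spiking instant $t_1>0$ (the first positive instant at which some cell spikes), all cells spike, i.e. $I(t_1)=\{1,\dots,m\}$.
   Context: Network model. Fix an integer $m\ge 2$ (the number of units, or cells). For each $i\in\{1,\dots,m\}$ the following data are given. - $X_i$ is a compact finite-dimensional smooth manifold. - $f_i$ is a continuous vector field on $X_i$. - $S_i:X_i\to\mathbb R$ is a $C^1$ function, called the satisfaction level. - $\theta_i>0$ is a constant, called the goal. These are required to satisfy: there is $v_i>0$ with $\nabla S_i(x)\cdot f_i(x)>v_i$ for every $x\in X_i$ with $S_i(x)<\theta_i$. Real interaction weights $\Delta_{ij}$ are given for $i\ne j$. The global state $\mathbf x(t)=(x_1(t),\dots,x_m(t))\in\prod_i X_i$, $t\ge 0$, evolves as follows. Spiking instants $0\le t_0<t_1<\cdots$ are the instants at which at least one cell spikes. Between consecutive spiking instants each $x_i$ evolves independently by $dx_i/dt=f_i(x_i)$. At an instant $t_n$, write $S_j(x_j(t_n^-))=\lim_{t\to t_n^-}S_j(x_j(t))$. The coalition is $I(t_n)=\bigcup_{p\ge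 0}I_p(t_n)$, where: - $I_0(t_n)$ is the set of cells $i$ with $S_i(x_i(t_n^-))\ge\theta_i$; - for $p\ge1$, $I_p(t_n)$ is the set of cells $j\notin\bigcup_{k<p}I_k(t_n)$ with $S_j(x_j(t_n^-))+\sum_{k<p}\sum_{i\in I_k(t_n)}\Delta_{ij}\ge\theta_j$. The spiking instants are exactly the instants with $I_0(t_n)\neq\emptyset$, and the cells in $I(t_n)$ are said to spike at $t_n$. At $t_n$ the state jumps as follows: - for $j\in I(t_n)$, $x_j(t_n)$ is a point with $S_j(x_j(t_n))=0$; - for $j\notin I(t_n)$, $x_j(t_n)$ is a point with $S_j(x_j(t_n))=S_j(x_j(t_n^-))+\sum_{i\in I(t_n),\,i\ne j}\Delta_{ij}$. Initial states are assumed to satisfy $S_i(x_i(0))\in[0,\theta_i)$ for all $i$. The network is cooperative if $\Delta_{ij}\ge 0$ for all $i\ne j$. A cooperative network is large enough if $\sqrt m\ge 1+\frac{\max_i\theta_i}{\min_{i\ne j}\Delta_{ij}}$; in particular this requires $\Delta_{ij}>0$ for all $i\ne j$. The grand coalition is exhibited at $t_n$ if $I(t_n)=\{1,\dots,m\}$. *)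

(* Defs.v *)
From Stdlib Require Import Reals List Arith Bool.
Import ListNotations.
Open Scope bool_scope.
Open Scope R_scope.

Definition Rmin_seq (l : list R) : R :=
  match l with nil => 0 | a :: t => fold_right Rmin a t end.
Definition Rmax_seq (l : list R) : R :=
  match l with nil => 0 | a :: t => fold_right Rmax a t end.

(* Cells are indexed by 0, ..., m-1. *)
Definition cells (m : nat) : list nat := seq 0 m.

Definition min_offdiag (m : nat) (Delta : nat -> nat -> R) : R :=
  Rmin_seq (flat_map (fun i => map (fun j => Delta i j)
              (filter (fun j => negb (Nat.eqb i j)) (cells m))) (cells m)).

Definition right_cont_at (f : R -> R) (a : R) : Prop :=
  forall eps, 0 < eps -> exists d, 0 < d /\
    forall t, a <= t < a + d -> Rabs (f t - f a) < eps.

Definition left_lim (f : R -> R) (a L : R) : Prop :=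
  forall eps, 0 < eps -> exists d, 0 < d /\
    forall t, a - d < t < a -> Rabs (f t - L) < eps.

Definition Rgeb (a b : R) : bool := if Rle_dec b a then true else false.

Definition mem_nat (j : nat) (l : list nat) : bool := existsb (Nat.eqb j) l.

(* Given the layers I_0, ..., I_{p-1} (as lists), the next layer I_p:
   cells j not in earlier layers with
   S_j(t^-) + sum_{k<p} sum_{i in I_k} Delta_ij >= theta_j.
   (For p = 0 this is exactly I_0 = {i | S_i(t^-) >= theta_i}.) *)
Definition next_layer (m : nat) (Delta : nat -> nat -> R) (theta Sminus : nat -> R)
    (pre : list (list nat)) : list nat :=
  filter (fun j => negb (mem_nat j (concat pre)) &&
             Rgeb (Sminus j + fold_right Rplus 0 (map (fun i => Delta i j) (concat pre)))
                  (theta j))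
         (cells m).

(* layers m Delta theta Sminus p = [I_0; ...; I_{p-1}] *)
Fixpoint layers (m : nat) (Delta : nat -> nat -> R) (theta Sminus : nat -> R) (p : nat)
    : list (list nat) :=
  match p with
  | O => nil
  | S p' => let pre := layers m Delta theta Sminus p' in
            pre ++ [next_layer m Delta theta Sminus pre]
  end.

(* j belongs to the coalition I = union_p I_p, computed from the left limits Sminus. *)
Definition in_coalition (m : nat) (Delta : nat -> nat -> R) (theta Sminus : nat -> R)
    (j : nat) : Prop :=
  exists p, In j (concat (layers m Delta theta Sminus p)).

(* Main.v *)
Require Import Defs.
From Stdlib Require Import Reals List Arith.
Open Scope R_scope.
From Stdlib Require Import Lra Lia.

Lemma lin_lower (f f' : R -> R) (c t1 : R) :
  (forall t, 0 < t < t1 -> derivable_pt_lim f t (f' t)) ->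
  (forall t, 0 < t < t1 -> c <= f' t) ->
  right_cont_at f 0 ->
  forall t, 0 < t < t1 -> f 0 + c * t <= f t.
Proof.
  intros Hd Hc Hr t Ht.
  destruct (Rle_dec (f 0 + c*t) (f t)) as [h|h]; [exact h|exfalso].
  set (eps := f 0 + c*t - f t).
  assert (He : 0 < eps/2) by (unfold eps; lra).
  destruct (Hr _ He) as [d [Hd0 Hdd]].
  set (s := Rmin (Rmin d t) (eps/(4*(Rabs c+1))) / 2).
  assert (Hc1 : 0 < Rabs c + 1) by (pose proof (Rabs_pos c); lra).
  assert (Hq : 0 < eps/(4*(Rabs c+1))) by (apply Rdiv_lt_0_compat; [unfold eps; lra|lra]).
  assert (Hm1 : Rmin (Rmin d t) (eps/(4*(Rabs c+1))) <= Rmin d t) by apply Rmin_l.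
  assert (Hm2 : Rmin (Rmin d t) (eps/(4*(Rabs c+1))) <= eps/(4*(Rabs c+1))) by apply Rmin_r.
  assert (Hm3 : Rmin d t <= d) by apply Rmin_l.
  assert (Hm4 : Rmin d t <= t) by apply Rmin_r.
  assert (Hm0 : 0 < Rmin (Rmin d t) (eps/(4*(Rabs c+1)))).
  { apply Rmin_glb_lt; [apply Rmin_glb_lt; lra|lra]. }
  assert (Hs0 : 0 < s) by (unfold s; lra).
  assert (Hst : s < t) by (unfold s; lra).
  assert (Hsd : s < d) by (unfold s; lra).
  assert (Hcs : Rabs c * s <= eps/4).
  { assert (s <= eps/(4*(Rabs c+1))) by (unfold s; lra).
    assert (Rabs c * s <= (Rabs c + 1) * s) by (pose proof (Rabs_pos c); nra).
    assert ((Rabs c + 1) * s <= (Rabs c + 1) * (eps/(4*(Rabs c+1)))) by (apply Rmult_le_compat_l; lra).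
    replace ((Rabs c + 1) * (eps/(4*(Rabs c+1)))) with (eps/4) in H1 by (field; lra).
    lra. }
  assert (Hfs := Hdd s ltac:(lra)).
  apply Rabs_def2 in Hfs.
  destruct (MVT_cor2 f f' s t Hst) as [c' [Heq Hc']].
  { intros c0 Hc0; apply Hd; lra. }
  assert (c * (t - s) <= f' c' * (t - s)) by (apply Rmult_le_compat_r; [lra| apply Hc; lra]).
  assert (c * s <= Rabs c * s).
  { destruct (Rle_dec 0 c). rewrite Rabs_right by lra; lra. rewrite Rabs_left by lra; assert (0 <= -c*s) by (apply Rmult_le_pos; lra); lra. }
  unfold eps in *. lra.
Qed.

Lemma lin_upper (f f' : R -> R) (c t1 : R) :
  (forall t, 0 < t < t1 -> derivable_pt_lim f t (f' t)) ->
  (forall t, 0 < t < t1 -> f' t <= c) ->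
  right_cont_at f 0 ->
  forall t, 0 < t < t1 -> f t <= f 0 + c * t.
Proof.
  intros Hd Hc Hr t Ht.
  assert (H := lin_lower (fun s => - f s) (fun s => - f' s) (-c) t1).
  assert (- f 0 + - c * t <= - f t); [|lra].
  apply H; auto.
  - intros s Hs. exact (derivable_pt_lim_opp f s (f' s) (Hd s Hs)).
  - intros s Hs. specialize (Hc s Hs). lra.
  - intros eps He. destruct (Hr eps He) as [d [Hd0 Hdd]]. exists d; split; auto.
    intros s Hs. replace (- f s - - f 0) with (- (f s - f 0)) by ring.
    rewrite Rabs_Ropp. auto.
Qed.

Lemma lim_lower (f : R -> R) (a c t1 L : R) : 0 < t1 ->
  left_lim f t1 L -> (forall t, 0 < t < t1 -> a + c * t <= f t) -> a + c * t1 <= L.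
Proof.
  intros Ht1 Hl Hf.
  destruct (Rle_dec (a + c*t1) L) as [h|h]; [exact h|exfalso].
  set (eps := (a + c*t1 - L)/2).
  assert (He : 0 < eps) by (unfold eps; lra).
  destruct (Hl _ He) as [d [Hd0 Hdd]].
  assert (Hc1 : 0 < Rabs c + 1) by (pose proof (Rabs_pos c); lra).
  assert (Hq : 0 < eps/(Rabs c+1)) by (apply Rdiv_lt_0_compat; lra).
  set (s := Rmin (Rmin d t1) (eps/(Rabs c+1)) / 2).
  assert (Hm1 : Rmin (Rmin d t1) (eps/(Rabs c+1)) <= Rmin d t1) by apply Rmin_l.
  assert (Hm2 : Rmin (Rmin d t1) (eps/(Rabs c+1)) <= eps/(Rabs c+1)) by apply Rmin_r.
  assert (Hm3 : Rmin d t1 <= d) by apply Rmin_l.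
  assert (Hm4 : Rmin d t1 <= t1) by apply Rmin_r.
  assert (Hm0 : 0 < Rmin (Rmin d t1) (eps/(Rabs c+1))).
  { apply Rmin_glb_lt; [apply Rmin_glb_lt; lra|lra]. }
  assert (Hs0 : 0 < s) by (unfold s; lra).
  assert (Hst : s < t1) by (unfold s; lra).
  assert (Hsd : s < d) by (unfold s; lra).
  assert (Hcs : Rabs c * s < eps).
  { assert (s < eps/(Rabs c+1)) by (unfold s; lra).
    assert (Rabs c * s <= (Rabs c + 1) * s) by (pose proof (Rabs_pos c); nra).
    assert ((Rabs c + 1) * s < (Rabs c + 1) * (eps/(Rabs c+1))) by (apply Rmult_lt_compat_l; lra).
    replace ((Rabs c + 1) * (eps/(Rabs c+1))) with eps in H1 by (field; lra).
    lra. }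
  assert (Hft := Hdd (t1 - s) ltac:(lra)).
  apply Rabs_def2 in Hft.
  assert (Hf1 := Hf (t1 - s) ltac:(lra)).
  assert (c * s <= Rabs c * s).
  { destruct (Rle_dec 0 c). rewrite Rabs_right by lra; lra. rewrite Rabs_left by lra; assert (0 <= -c*s) by (apply Rmult_le_pos; lra); lra. }
  unfold eps in *. lra.
Qed.

Lemma lim_upper (f : R -> R) (a c t1 L : R) : 0 < t1 ->
  left_lim f t1 L -> (forall t, 0 < t < t1 -> f t <= a + c * t) -> L <= a + c * t1.
Proof.
  intros Ht1 Hl Hf.
  assert (-a + -c * t1 <= -L); [|lra].
  apply (lim_lower (fun s => - f s)); auto.
  - intros eps He. destruct (Hl eps He) as [d [Hd0 Hdd]]. exists d; split; auto.
    intros s Hs. replace (- f s - - L) with (- (f s - L)) by ring.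
    rewrite Rabs_Ropp. auto.
  - intros t Ht. specialize (Hf t Ht). lra.
Qed.

Lemma fold_min_le (t : list R) (a : R) :
  fold_right Rmin a t <= a /\ forall y, In y t -> fold_right Rmin a t <= y.
Proof.
  induction t as [|b t IH]; simpl.
  - split; [lra| intros y []].
  - destruct IH as [IH1 IH2]. split.
    + eapply Rle_trans; [apply Rmin_r| exact IH1].
    + intros y [<-|Hy]; [apply Rmin_l|]. eapply Rle_trans; [apply Rmin_r| auto].
Qed.

Lemma fold_max_ge (t : list R) (a : R) :
  a <= fold_right Rmax a t /\ forall y, In y t -> y <= fold_right Rmax a t.
Proof.
  induction t as [|b t IH]; simpl.
  - split; [lra| intros y []].
  - destruct IH as [IH1 IH2]. split.
    + eapply Rle_trans; [exact IH1|apply Rmax_r].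
    + intros y [<-|Hy]; [apply Rmax_l|]. eapply Rle_trans; [apply IH2; auto|apply Rmax_r].
Qed.

Lemma Rmin_seq_le l y : In y l -> Rmin_seq l <= y.
Proof.
  destruct l as [|a t]; [intros []|]. simpl. destruct (fold_min_le t a) as [H1 H2].
  intros [<-|Hy]; auto.
Qed.

Lemma Rmax_seq_ge l y : In y l -> y <= Rmax_seq l.
Proof.
  destruct l as [|a t]; [intros []|]. simpl. destruct (fold_max_ge t a) as [H1 H2].
  intros [<-|Hy]; auto.
Qed.

Lemma Rmin_seq_pos l : l <> nil -> (forall y, In y l -> 0 < y) -> 0 < Rmin_seq l.
Proof.
  destruct l as [|a t]; [congruence|]. intros _ H. simpl.
  assert (Ha : 0 < a) by (apply H; left; auto).
  assert (Ht : forall y, In y t -> 0 < y) by (intros; apply H; right; auto).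
  clear H. induction t as [|b t IH]; simpl; auto.
  apply Rmin_glb_lt; [apply Ht; left; auto| apply IH; intros; apply Ht; right; auto].
Qed.

Lemma in_cells m i : (i < m)%nat -> In i (cells m).
Proof. intros; unfold cells; apply in_seq; lia. Qed.

Lemma cells_lt m i : In i (cells m) -> (i < m)%nat.
Proof. unfold cells; rewrite in_seq; lia. Qed.

Lemma min_offdiag_le m Delta i j : (i < m)%nat -> (j < m)%nat -> i <> j ->
  min_offdiag m Delta <= Delta i j.
Proof.
  intros Hi Hj Hij. unfold min_offdiag. apply Rmin_seq_le.
  apply in_flat_map. exists i. split; [apply in_cells; auto|].
  apply in_map. apply filter_In. split; [apply in_cells; auto|].
  destruct (Nat.eqb_spec i j); [contradiction|reflexivity].
Qed.

Lemma min_offdiag_pos m Delta : (2 <= m)%nat ->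
  (forall i j, (i < m)%nat -> (j < m)%nat -> i <> j -> 0 < Delta i j) ->
  0 < min_offdiag m Delta.
Proof.
  intros Hm HD. unfold min_offdiag. apply Rmin_seq_pos.
  - intro E. assert (In (Delta 0%nat 1%nat) (flat_map (fun i => map (fun j => Delta i j)
              (filter (fun j => negb (Nat.eqb i j)) (cells m))) (cells m))).
    { apply in_flat_map. exists 0%nat. split; [apply in_cells; lia|].
      apply in_map. apply filter_In. split; [apply in_cells; lia| reflexivity]. }
    rewrite E in H. destruct H.
  - intros y Hy. apply in_flat_map in Hy. destruct Hy as [i [Hi Hy]].
    apply in_map_iff in Hy. destruct Hy as [j [<- Hj]]. apply filter_In in Hj.
    destruct Hj as [Hj Hn]. apply HD; try (apply cells_lt; auto).
    intro E; subst. rewrite Nat.eqb_refl in Hn. discriminate.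
Qed.

Lemma sum_ge (Delta : nat -> nat -> R) j i0 l :
  (forall i, In i l -> 0 <= Delta i j) -> In i0 l ->
  Delta i0 j <= fold_right Rplus 0 (map (fun i => Delta i j) l).
Proof.
  induction l as [|a l IH]; simpl; [intros _ []|].
  intros H [<-|Hi].
  - assert (0 <= fold_right Rplus 0 (map (fun i => Delta i j) l)).
    { clear IH. induction l; simpl; [lra|].
      assert (0 <= Delta a0 j) by (apply H; right; left; auto).
      assert (0 <= fold_right Rplus 0 (map (fun i => Delta i j) l)); [|lra].
      apply IHl; intros i [E|E]; apply H; [left; auto| right; right; auto]. }
    lra.
  - assert (0 <= Delta a j) by (apply H; left; auto).
    assert (Delta i0 j <= fold_right Rplus 0 (map (fun i => Delta i j) l)); [|lra].
    apply IH; auto.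
Qed.

Lemma Rgeb_true a b : b <= a -> Rgeb a b = true.
Proof. unfold Rgeb; destruct (Rle_dec b a); auto; contradiction. Qed.
Lemma Rgeb_true_inv a b : Rgeb a b = true -> b <= a.
Proof. unfold Rgeb; destruct (Rle_dec b a); auto; discriminate. Qed.

Lemma mem_nat_In j l : mem_nat j l = true <-> In j l.
Proof.
  unfold mem_nat; rewrite existsb_exists; split.
  - intros [y [Hy E]]. apply Nat.eqb_eq in E; subst; auto.
  - intros H; exists j; split; auto; apply Nat.eqb_refl.
Qed.
Theorem mainTheorem6
  (m : nat) (Hm : (2 <= m)%nat)
  (X : nat -> Type)
  (S : forall i, X i -> R)            (* satisfaction levels S_i *)
  (rate : forall i, X i -> R)         (* rate i x = grad S_i(x) . f_i(x) *)
  (theta v : nat -> R)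
  (Delta : nat -> nat -> R)
  (Htheta : forall i, (i < m)%nat -> 0 < theta i)
  (Hv : forall i, (i < m)%nat -> 0 < v i)
  (Hrate : forall i, (i < m)%nat -> forall x : X i, S i x < theta i -> rate i x > v i)
  (HDelta : forall i j, (i < m)%nat -> (j < m)%nat -> i <> j -> 0 < Delta i j)
  (* rmax i / rmin i = max / min of rate i over S_i^{-1}([0, theta_i]) *)
  (rmax rmin : nat -> R)
  (Hrmax : forall i, (i < m)%nat ->
     (exists x : X i, 0 <= S i x <= theta i /\ rate i x = rmax i) /\
     (forall x : X i, 0 <= S i x <= theta i -> rate i x <= rmax i))
  (Hrmin : forall i, (i < m)%nat ->
     (exists x : X i, 0 <= S i x <= theta i /\ rate i x = rmin i) /\
     (forall x : X i, 0 <= S i x <= theta i -> rmin i <= rate i x))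
  (Hrmin_pos : forall i, (i < m)%nat -> 0 < rmin i)
  (* similarity inequality *)
  (Hsim : Rmin_seq (map (fun i => theta i / rmax i) (cells m))
            / Rmax_seq (map (fun i => theta i / rmin i) (cells m))
          >= 1 - min_offdiag m Delta / Rmax_seq (map theta (cells m)))
  (* trajectory on [0, t1): no spike, evolution by the flow *)
  (x : forall i, R -> X i) (t1 : R) (Ht1 : 0 < t1)
  (Hinit : forall i, (i < m)%nat -> S i (x i 0) = 0)
  (Hcont0 : forall i, (i < m)%nat -> right_cont_at (fun t => S i (x i t)) 0)
  (Hflow : forall i, (i < m)%nat -> forall t, 0 < t < t1 ->
     derivable_pt_lim (fun s => S i (x i s)) t (rate i (x i t)))
  (Hnospike : forall i, (i < m)%nat -> forall t, 0 <= t < t1 -> S i (x i t) < theta i)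
  (* left limits S_i(x_i(t1^-)) *)
  (Sminus : nat -> R)
  (Hlim : forall i, (i < m)%nat -> left_lim (fun t => S i (x i t)) t1 (Sminus i))
  (* t1 is a spiking instant: I_0(t1) nonempty *)
  (Hspike : exists i, (i < m)%nat /\ Sminus i >= theta i) :
  forall j, (j < m)%nat -> in_coalition m Delta theta Sminus j.
Proof.
  intros j Hj.
  destruct Hspike as [i0 [Hi0 Hsp]].
  assert (Hpos : forall k, (k < m)%nat -> forall t, 0 < t < t1 -> 0 <= S k (x k t)).
  { intros k Hk t Ht.
    assert (H := lin_lower (fun s => S k (x k s)) (fun s => rate k (x k s)) 0 t1
       (Hflow k Hk) ltac:(intros s Hs; pose proof (Hrate k Hk (x k s) (Hnospike k Hk s ltac:(lra)));
                         pose proof (Hv k Hk); lra) (Hcont0 k Hk) t Ht).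
    simpl in H. rewrite (Hinit k Hk) in H. lra. }
  assert (Hlow : forall k, (k < m)%nat -> rmin k * t1 <= Sminus k).
  { intros k Hk.
    assert (0 + rmin k * t1 <= Sminus k); [|lra].
    apply (lim_lower (fun s => S k (x k s))); auto.
    intros t Ht.
    assert (H := lin_lower (fun s => S k (x k s)) (fun s => rate k (x k s)) (rmin k) t1
       (Hflow k Hk) ltac:(intros s Hs; apply (proj2 (Hrmin k Hk));
          pose proof (Hpos k Hk s Hs); pose proof (Hnospike k Hk s ltac:(lra)); lra)
       (Hcont0 k Hk) t Ht).
    simpl in H. rewrite (Hinit k Hk) in H. lra. }
  assert (Hup : Sminus i0 <= rmax i0 * t1).
  { assert (Sminus i0 <= 0 + rmax i0 * t1); [|lra].
    apply (lim_upper (fun s => S i0 (x i0 s))); auto.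
    intros t Ht.
    assert (H := lin_upper (fun s => S i0 (x i0 s)) (fun s => rate i0 (x i0 s)) (rmax i0) t1
       (Hflow i0 Hi0) ltac:(intros s Hs; apply (proj2 (Hrmax i0 Hi0));
          pose proof (Hpos i0 Hi0 s Hs); pose proof (Hnospike i0 Hi0 s ltac:(lra)); lra)
       (Hcont0 i0 Hi0) t Ht).
    simpl in H. rewrite (Hinit i0 Hi0) in H. lra. }
  assert (Hrmaxpos : forall k, (k < m)%nat -> 0 < rmax k).
  { intros k Hk. destruct (proj1 (Hrmax k Hk)) as [y [Hy E]].
    pose proof (proj2 (Hrmin k Hk) y Hy). pose proof (Hrmin_pos k Hk). lra. }
  set (A := Rmin_seq (map (fun i => theta i / rmax i) (cells m))) in *.
  set (B := Rmax_seq (map (fun i => theta i / rmin i) (cells m))) in *.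
  set (D := min_offdiag m Delta) in *.
  set (M := Rmax_seq (map theta (cells m))) in *.
  assert (HA : A <= theta i0 / rmax i0) by (apply Rmin_seq_le; apply (in_map (fun i => theta i / rmax i)); apply in_cells; auto).
  assert (HB : theta j / rmin j <= B) by (apply Rmax_seq_ge; apply (in_map (fun i => theta i / rmin i)); apply in_cells; auto).
  assert (HM : theta j <= M) by (apply Rmax_seq_ge; apply (in_map theta); apply in_cells; auto).
  assert (HD : 0 < D) by (apply min_offdiag_pos; auto).
  pose proof (Htheta j Hj) as Tj. pose proof (Htheta i0 Hi0) as Ti0.
  pose proof (Hrmin_pos j Hj) as Rj. pose proof (Hrmaxpos i0 Hi0) as Ri0.
  assert (HAt : A <= t1).
  { assert (A * rmax i0 <= theta i0).
    { apply (Rmult_le_compat_r (rmax i0)) in HA; [|lra].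
      replace (theta i0 / rmax i0 * rmax i0) with (theta i0) in HA by (field; lra). exact HA. }
    assert (A * rmax i0 <= t1 * rmax i0) by lra.
    apply Rmult_le_reg_r in H0; lra. }
  assert (HBj : theta j <= B * rmin j).
  { apply (Rmult_le_compat_r (rmin j)) in HB; [|lra].
    replace (theta j / rmin j * rmin j) with (theta j) in HB by (field; lra). exact HB. }
  assert (HBpos : 0 < B) by (destruct (Rle_dec B 0); [nra|lra]).
  assert (HMpos : 0 < M) by lra.
  assert (Key : theta j <= rmin j * t1 + D).
  { set (u := A / B) in *. set (w := D / M) in *.
    assert (Au : A = u * B) by (unfold u; field; lra).
    assert (Dw : D = w * M) by (unfold w; field; lra).
    assert (rmin j * A <= rmin j * t1) by (apply Rmult_le_compat_l; lra).
    destruct (Rle_dec 0 (1 - w)).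
    - assert (rmin j * B * (1 - w) <= rmin j * B * u) by (apply Rmult_le_compat_l; nra).
      assert (theta j * (1 - w) <= (B * rmin j) * (1 - w)) by (apply Rmult_le_compat_r; lra).
      assert (theta j * w <= M * w) by (apply Rmult_le_compat_r; nra).
      rewrite Au in H. nra.
    - assert (0 < rmin j * t1) by nra. nra. }
  set (L0 := next_layer m Delta theta Sminus nil).
  assert (Hi0L0 : In i0 L0).
  { unfold L0, next_layer. apply filter_In. split; [apply in_cells; auto|].
    simpl. apply Rgeb_true. lra. }
  destruct (mem_nat j L0) eqn:Ej.
  - exists 1%nat. simpl. rewrite app_nil_r. apply mem_nat_In; exact Ej.
  - exists 2%nat.
    assert (E2 : concat (layers m Delta theta Sminus 2) = L0 ++ (next_layer m Delta theta Sminus (L0 :: nil) ++ nil)) by reflexivity.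
    rewrite E2. apply in_or_app. right. apply in_or_app. left. unfold next_layer. apply filter_In. split; [apply in_cells; auto|].
    simpl. rewrite app_nil_r. fold L0. rewrite Ej. simpl. apply Rgeb_true.
    assert (Hne : i0 <> j) by (intro E; subst; apply mem_nat_In in Hi0L0; congruence).
    assert (D <= Delta i0 j) by (apply min_offdiag_le; auto).
    assert (Delta i0 j <= fold_right Rplus 0 (map (fun i => Delta i j) L0)).
    { apply sum_ge; auto. intros i Hi. assert (Him : (i < m)%nat).
      { unfold L0, next_layer in Hi. apply filter_In in Hi. apply cells_lt; tauto. }
      assert (i <> j) by (intro E; subst; apply mem_nat_In in Hi; congruence).
      left; apply HDelta; auto. }
    pose proof (Hlow j Hj). lra.
Qed.
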